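(* Let $n,m,k$ be positive integers and let $\varphi$ be an automorphism of $\Gamma=\mathbb{Z}_{nm}\mathbin{\mathrm{wr}}\mathbb{Z}^k$. Let $\varphi_n$ and $\varphi_m$ be the automorphisms of $\mathbb{Z}_n\mathbin{\mathrm{wr}}\mathbb{Z}^k$ and $\mathbb{Z}_m\mathbin{\mathrm{wr}}\mathbb{Z}^k$ determined by $\Pi_n\circ\varphi=\varphi_n\circ\Pi_n$ and $\Pi_m\circ\varphi=\varphi_m\circ\Pi_m$. If $R(\varphi_n')=R(\varphi_m')=1$, then $R(\varphi')=1$.
   Context: $\mathbb{Z}_q\mathbin{\mathrm{wr}}\mathbb{Z}^k=\bigoplus_{x\in\mathbb{Z}^k}(\mathbb{Z}_q)_x\rtimes_\alpha\mathbb{Z}^k$ is the restricted wreath product, $\alpha(z)$ mapping $(\mathbb{Z}_q)_x$ onto $(\mathbb{Z}_q)_{z+x}$; its torsion subgroup $\Sigma_q=\bigoplus_x(\mathbb{Z}_q)_x$ is characteristic, and for an automorphism $\psi$, $\psi'$ denotes the restriction of $\psi$ to the torsion subgroup. For $d\mid nm$, $\Pi_d\colon\mathbb{Z}_{nm}\mathbin{\mathrm{wr}}\mathbb{Z}^k\to\mathbb{Z}_d\mathbin{\mathrm{wr}}\mathbb{Z}^k$ is $\Pi_d(\sigma,z)=(\pi_d(\sigma),z)$, where $\pi_d$ reduces every coefficient mod $d$; its kernel is characteristic, so $\varphi_d$ is well defined. $R(\psi)$ denotes the Reidemeister number: the number of classes of the relation $g_1\sim hg_2\psi(h^{-1})$;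 for the abelian group $\Sigma$, $R(\varphi')=1$ means $1-\varphi'$ is surjective. *)

(* Defs.v *)
From HB Require Import structures.
From mathcomp Require Import all_boot all_order all_algebra.
Set Implicit Arguments. Unset Strict Implicit. Unset Printing Implicit Defensive.
Import Order.TTheory GRing.Theory Num.Theory.
Local Open Scope ring_scope.

(* Z_q for q > 0: the ordinals 'I_q, written 'I_(q.-1).+1 so that the
   canonical zmodType structure of Zp applies (also for q = 1, trivial group). *)
Notation Zmod q := 'I_(q.-1).+1.

Notation Zk k := 'rV[int]_k.

(* Carrier for Z_q wr Z^k : pairs (sigma, z) with sigma : Z^k -> Z_q;
   the group itself is the subset of pairs with sigma finitely supported. *)
Definition wr (q k : nat) : Type := ((Zk k -> Zmod q) * Zk k)%type.

Definition fin_supp (q k : nat) (s : Zk k -> Zmod q) : Prop :=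
  exists r : seq (Zk k), forall x, s x != 0 -> x \in r.

Definition inW (q k : nat) (g : wr q k) : Prop := fin_supp g.1.

Definition inSigma (q k : nat) (g : wr q k) : Prop := inW g /\ g.2 = 0.

(* alpha(z) maps (Z_q)_x onto (Z_q)_(z+x): (alpha(z) s)(y) = s(y - z) *)
Definition wmul (q k : nat) (g h : wr q k) : wr q k :=
  (fun x => g.1 x + h.1 (x - g.2), g.2 + h.2).
Definition wone (q k : nat) : wr q k := (fun _ => 0, 0).
Definition winv (q k : nat) (g : wr q k) : wr q k :=
  (fun x => - g.1 (x + g.2), - g.2).

Definition is_aut (q k : nat) (phi : wr q k -> wr q k) : Prop :=
  [/\ (forall g, inW g -> inW (phi g)),
      (forall g h, inW g -> inW h -> phi (wmul g h) = wmul (phi g) (phi h)),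
      (forall g h, inW g -> inW h -> phi g = phi h -> g = h) &
      (forall g', inW g' -> exists2 g, inW g & phi g = g')].

Definition redmod (q d : nat) (a : Zmod q) : Zmod d := inZp (nat_of_ord a).

Definition proj (q d k : nat) (g : wr q k) : wr d k :=
  (fun x => redmod d (g.1 x), g.2).

(* R(phi') = 1 : the restriction phi' of phi to Sigma_q has exactly one
   Reidemeister class, i.e. any two elements of Sigma_q are twisted-conjugate
   via some h in Sigma_q  (g1 ~ h g2 phi(h)^-1). *)
Definition reid_one (q k : nat) (phi : wr q k -> wr q k) : Prop :=
  forall g1 g2, inSigma g1 -> inSigma g2 ->
    exists2 h, inSigma h & g1 = wmul (wmul h g2) (winv (phi h)).

(* Main.v *)
Require Import Defs.
From HB Require Import structures.
From mathcomp Require Import all_boot all_order all_algebra.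
From Stdlib Require Import FunctionalExtensionality.
Set Implicit Arguments. Unset Strict Implicit. Unset Printing Implicit Defensive.
Import Order.TTheory GRing.Theory Num.Theory.
Local Open Scope ring_scope.

Lemma inW_wone q k : inW (wone q k).
Proof. by exists [::]. Qed.

Lemma inW_wmul q k (g h : wr q k) : inW g -> inW h -> inW (wmul g h).
Proof.
move=> [r1 H1] [r2 H2]; exists (r1 ++ map (fun y => y + g.2) r2) => x /= Hx.
rewrite mem_cat; case: (eqVneq (g.1 x) 0) => [E|/H1 ->//].
have : h.1 (x - g.2) != 0 by move: Hx; rewrite E add0r.
move=> /H2 Hm; apply/orP; right.
by rewrite -(subrK g.2 x); apply: map_f.
Qed.

Definition wpow q k (g : wr q k) (N : nat) := iter N (wmul g) (wone q k).

Lemma inW_wpow q k (g : wr q k) N : inW g -> inW (wpow g N).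
Proof. move=> Hg; elim: N => [|N IH] /=; [exact: inW_wone| exact: inW_wmul]. Qed.

Lemma wpow_snd q k (g : wr q k) N : (wpow g N).2 = g.2 *+ N.
Proof. elim: N => [|N IH] //=; by rewrite IH mulrS. Qed.

Lemma wpow_sigma q k (g : wr q k) N : g.2 = 0 ->
  wpow g N = (fun x => g.1 x *+ N, 0).
Proof.
move=> E; elim: N => [|N IH] /=; first by [].
rewrite IH /wmul /= E addr0; f_equal.
by apply: functional_extensionality => x; rewrite subr0 mulrS.
Qed.

Lemma wmul_sigma q k (g h : wr q k) : g.2 = 0 -> h.2 = 0 ->
  wmul g h = (fun x => g.1 x + h.1 x, 0).
Proof.
move=> Eg Eh; rewrite /wmul Eg Eh addr0; f_equal.
by apply: functional_extensionality => x; rewrite subr0.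
Qed.

Lemma idem0 (V : zmodType) (a : V) : a = a + a -> a = 0.
Proof. move=> E; have : a - a = (a + a) - a by rewrite -E. by rewrite subrr addrK. Qed.

Lemma aut_wone q k (phi : wr q k -> wr q k) : is_aut phi -> phi (wone q k) = wone q k.
Proof.
case=> _ Hm _ _.
have E : wmul (wone q k) (wone q k) = wone q k.
  by rewrite wmul_sigma // /wone; f_equal; apply: functional_extensionality => x; rewrite addr0.
have := Hm _ _ (inW_wone q k) (inW_wone q k); rewrite E.
case: (phi (wone q k)) => s z /= [] .
move=> Es Ez.
have z0 : z = 0 by apply: idem0.
have s0 : s = fun=> 0.
  apply: functional_extensionality => x.
  have := congr1 (fun f => f x) Es; rewrite /= z0 subr0; exact: idem0.
by rewrite /wone z0 s0.
Qed.

Lemma aut_wpow q k (phi : wr q k -> wr q k) g N : is_aut phi -> inW g ->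
  phi (wpow g N) = wpow (phi g) N.
Proof.
move=> Ha Hg; elim: N => [|N IH] /=; first exact: aut_wone.
case: Ha => _ Hm _ _; by rewrite Hm ?IH //; apply: inW_wpow.
Qed.


Lemma mxMn_entry k (A : Zk k) N i j : (A *+ N) i j = A i j *+ N.
Proof. elim: N => [|N IH]; first by rewrite !mulr0n mxE. by rewrite !mulrS mxE IH. Qed.

Lemma zmod_char q (a : Zmod q) : (0 < q)%N -> a *+ q = 0.
Proof.
case: q a => // q' a _; rewrite Zp_mulrn; apply: val_inj => /=.
by rewrite modnMl.
Qed.

Lemma aut_sigma q k (phi : wr q k -> wr q k) g : (0 < q)%N -> is_aut phi ->
  inSigma g -> inSigma (phi g).
Proof.
move=> q0 Ha [Hg g2]; split; first by case: Ha => H _ _ _; exact: H.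
have E : wpow g q = wone q k.
  rewrite wpow_sigma // /wone; f_equal; apply: functional_extensionality => x.
  exact: zmod_char.
have := aut_wpow q Ha Hg; rewrite E aut_wone // => /(congr1 snd).
rewrite wpow_snd /= => /esym H.
apply/matrixP => i j; have := congr1 (fun M : Zk k => M i j) H.
rewrite /= mxMn_entry mxE => /eqP; rewrite mulrn_eq0 => /orP [|/eqP //]; by move/eqP => q00; rewrite q00 in q0.
Qed.

Lemma fs_map q q' k (f : Zmod q -> Zmod q') (s : Zk k -> Zmod q) :
  f 0 = 0 -> fin_supp s -> fin_supp (fun x => f (s x)).
Proof.
move=> f0 [r H]; exists r => x Hx; apply: H; apply: contraNneq Hx => ->; by rewrite f0.
Qed.

Lemma fs_add q k (s t : Zk k -> Zmod q) :
  fin_supp s -> fin_supp t -> fin_supp (fun x => s x + t x).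
Proof.
move=> [r1 H1] [r2 H2]; exists (r1 ++ r2) => x Hx; rewrite mem_cat.
case: (eqVneq (s x) 0) => [E|/H1 -> //]; apply/orP; right; apply: H2.
by move: Hx; rewrite E add0r.
Qed.

Lemma fs_opp q k (s : Zk k -> Zmod q) : fin_supp s -> fin_supp (fun x => - s x).
Proof. exact: (@fs_map q q k (fun v => - v) s (oppr0 _)). Qed.

Lemma valD q (a b : Zmod q) : (0 < q)%N -> nat_of_ord (a + b) = ((a + b) %% q)%N.
Proof. by case: q a b. Qed.

Lemma val_inZp q x : (0 < q)%N -> nat_of_ord (inZp x : Zmod q) = (x %% q)%N.
Proof. by case: q. Qed.

Lemma valMn q (a : Zmod q) N : (0 < q)%N -> nat_of_ord (a *+ N) = ((a * N) %% q)%N.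
Proof. case: q a => // q a _. by rewrite Zp_mulrn. Qed.

Lemma val_lt q (a : Zmod q) : (0 < q)%N -> (a < q)%N.
Proof. case: q a => // q a _; exact: ltn_ord. Qed.

Lemma redmodD q d (a b : Zmod q) : (0 < q)%N -> (0 < d)%N -> (d %| q)%N ->
  redmod d (a + b) = redmod d a + redmod d b.
Proof.
case: q a b => // q a b _; case: d => // d _ dq; apply: val_inj => /=.
by rewrite modnDm (modn_dvdm _ dq).
Qed.

Lemma redmod0 q d : (0 < d)%N -> redmod d (0 : Zmod q) = 0.
Proof. case: d => // d _; apply: val_inj => /=; by rewrite mod0n. Qed.

Lemma redmodN q d (a : Zmod q) : (0 < q)%N -> (0 < d)%N -> (d %| q)%N ->
  redmod d (- a) = - redmod d a.
Proof.
move=> q0 d0 dq; apply/eqP; rewrite -subr_eq0 opprK -redmodD // addNr redmod0 //.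
Qed.

Lemma redmod_lift q d (v : Zmod d) : (0 < d)%N -> (d <= q)%N ->
  redmod d (inZp v : Zmod q) = v.
Proof.
case: d v => // d v _; case: q => [//|q] dq; apply: val_inj => /=.
have vd := ltn_ord v.
by rewrite (modn_small (leq_trans vd dq)) modn_small.
Qed.

Lemma redmod_eq0 q d (a : Zmod q) : (0 < d)%N -> redmod d a = 0 -> (d %| a)%N.
Proof.
case: d => // d _ /(congr1 val) /= E.
by rewrite /dvdn E.
Qed.

Lemma divide_lemma n m (w : Zmod (n * m)) : (0 < n)%N -> (0 < m)%N -> (m %| w)%N ->
  (inZp (w %/ m) : Zmod (n * m)) *+ m = w.
Proof.
move=> n0 m0 mw; have q0 : (0 < n * m)%N by rewrite muln_gt0 n0.
apply: val_inj => /=; rewrite valMn // val_inZp //.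
have wl := val_lt w q0.
have wl2 : (w %/ m < n * m)%N.
  by apply: leq_ltn_trans wl; apply: leq_div.
by rewrite (modn_small wl2) divnK // modn_small.
Qed.

Lemma zero_lemma n m (v : Zmod (n * m)) : (0 < n)%N -> (0 < m)%N -> (n %| v)%N ->
  v *+ m = 0.
Proof.
move=> n0 m0 /dvdnP [t Ht]; have q0 : (0 < n * m)%N by rewrite muln_gt0 n0.
apply: val_inj => /=; rewrite valMn // Ht -mulnA modnMl.
by case: (n * m)%N q0.
Qed.

Lemma zmod_arith (V : zmodType) (S A PA Ym Bm PBm : V) :
  S - A + PA = Ym -> Ym - Bm + PBm = 0 -> S = A + Bm - (PA + PBm).
Proof.
move=> H1 H2.
have HS : S = Ym - PA + A by rewrite -H1 addrK subrK.
have HY : Ym = Bm - PBm.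
  by apply/eqP; rewrite -subr_eq0 opprB addrA addrAC H2.
by rewrite HS HY opprD addrA [LHS]addrC !addrA [LHS]addrAC.
Qed.

Lemma step q d k (phi : wr q k -> wr q k) (phid : wr d k -> wr d k) :
  (0 < q)%N -> (0 < d)%N -> (d %| q)%N -> is_aut phi ->
  (forall g, inW g -> proj d (phi g) = phid (proj d g)) -> reid_one phid ->
  forall s : Zk k -> Zmod q, fin_supp s ->
  exists2 a : Zk k -> Zmod q, fin_supp a &
    forall x, (d %| nat_of_ord (s x - a x + (phi (a, 0)).1 x)%R)%N.
Proof.
move=> q0 d0 dq Ha Hp Hr s Hs.
have dleq : (d <= q)%N by apply: dvdn_leq.
pose g1 : wr d k := (fun x => redmod d (s x), 0).
have Hg1 : inSigma g1 by split => //; apply: (fs_map (f := redmod d)) => //; exact: redmod0.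
have Hone : inSigma (wone d k) by split => //; exact: inW_wone.
have [h' [Hh' h2] Eq] := Hr g1 (wone d k) Hg1 Hone.
pose a := fun x => (inZp (h'.1 x) : Zmod q).
have Ha' : fin_supp a.
  apply: (fs_map (f := fun v : Zmod d => (inZp v : Zmod q))) => //.
  by apply: val_inj => /=; rewrite mod0n.
exists a => // x.
have Pa : proj d (a, 0) = h'.
  rewrite /proj /= [in RHS](surjective_pairing h') h2; f_equal.
  by apply: functional_extensionality => y; rewrite redmod_lift.
have HaS : inSigma ((a, 0) : wr q k) by [].
have [_ P2] := aut_sigma q0 Ha HaS.
have := Hp _ (proj1 HaS); rewrite Pa => EP.
rewrite -EP in Eq.
have E := congr1 (fun g : wr d k => g.1 x) Eq; simpl in E.
rewrite h2 P2 !addr0 subr0 in E.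
apply: (redmod_eq0 d0).
rewrite !redmodD // redmodN // E.
have -> : redmod d (a x) = h'.1 x by rewrite /a redmod_lift.
by rewrite addrAC subrK subrr.
Qed.

Lemma main_lemma (n m k : nat) (hn : (0 < n)%N) (hm : (0 < m)%N)
  (phi : wr (n * m) k -> wr (n * m) k)
  (phin : wr n k -> wr n k) (phim : wr m k -> wr m k) :
  is_aut phi -> is_aut phin -> is_aut phim ->
  (forall g, inW g -> proj n (phi g) = phin (proj n g)) ->
  (forall g, inW g -> proj m (phi g) = phim (proj m g)) ->
  reid_one phin -> reid_one phim -> reid_one phi.
Proof.
move=> Ha Han Ham Hpn Hpm Hrn Hrm g1 g2 [Hg1 g12] [Hg2 g22].
have q0 : (0 < n * m)%N by rewrite muln_gt0 hn.
pose s := fun x => g1.1 x - g2.1 x.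
have Hs : fin_supp s by apply: fs_add => //; apply: fs_opp.
have [a Hfa Hda] := step q0 hm (dvdn_mull n (dvdnn m)) Ha Hpm Hrm Hs.
have HaS : inSigma ((a, 0) : wr (n * m) k) by [].
have [HPa Pa2] := aut_sigma q0 Ha HaS.
pose w := fun x => s x - a x + (phi (a, 0)).1 x.
have Hfw : fin_supp w by apply: fs_add => //; apply: fs_add => //; apply: fs_opp.
pose y := fun x => (inZp (w x %/ m) : Zmod (n * m)).
have Hfy : fin_supp y.
  apply: (fs_map (f := fun v : Zmod (n * m) => (inZp (v %/ m) : Zmod (n * m)))) => //.
  by apply: val_inj => /=; rewrite div0n mod0n.
have [b Hfb Hdb] := step q0 hn (dvdn_mulr m (dvdnn n)) Ha Hpn Hrn Hfy.
have HbS : inSigma ((b, 0) : wr (n * m) k) by [].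
have [HPb Pb2] := aut_sigma q0 Ha HbS.
pose c := fun x => b x *+ m.
have Hfc : fin_supp c by apply: (fs_map (f := fun v : Zmod (n * m) => v *+ m)) => //; rewrite mul0rn.
pose e := fun x => a x + c x.
case: (Ha) => _ Hm _ _.
have Ec : phi (c, 0) = (fun x => (phi (b, 0)).1 x *+ m, 0).
  have -> : ((c, 0) : wr (n * m) k) = wpow (b, 0) m by rewrite wpow_sigma.
  by rewrite aut_wpow // wpow_sigma.
have Ee : phi (e, 0) = (fun x => (phi (a, 0)).1 x + (phi (b, 0)).1 x *+ m, 0).
  have -> : ((e, 0) : wr (n * m) k) = wmul (a, 0) (c, 0) by rewrite wmul_sigma.
  by rewrite Hm // Ec wmul_sigma.
have Key : forall x, s x = e x - (phi (e, 0)).1 x.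
  move=> x; rewrite Ee /e /c /=.
  apply: (@zmod_arith _ _ _ _ (y x *+ m)).
  - by rewrite divide_lemma //; apply: Hda.
  by rewrite -mulrnBl -mulrnDl zero_lemma.
have HeS : inSigma ((e, 0) : wr (n * m) k) by split => //; apply: fs_add.
have [HPe Pe2] := aut_sigma q0 Ha HeS.
exists (e, 0) => //.
rewrite (surjective_pairing (phi (e, 0))) Pe2.
have Key2 : forall x, g1.1 x = e x + g2.1 x - (phi (e, 0)).1 x.
  by move=> x; rewrite addrAC -Key /s subrK.
clear Key Hdb Hfy y Hfw w Hda Hs s.
case: g1 g12 Hg1 Key2 => s1 z1 /= -> _.
case: g2 g22 Hg2 => s2 z2 /= -> _ Key2.
rewrite /wmul /winv /= !addr0 oppr0 !addr0.
apply: (f_equal2 pair) => //; apply: functional_extensionality => x; by rewrite !addr0 Key2.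
Qed.

Local Close Scope ring_scope.

Theorem theorem4p3 (n m k : nat) (hn : (0 < n)%N) (hm : (0 < m)%N) (hk : (0 < k)%N)
  (phi : wr (n * m) k -> wr (n * m) k)
  (phin : wr n k -> wr n k) (phim : wr m k -> wr m k) :
  is_aut phi -> is_aut phin -> is_aut phim ->
  (forall g, inW g -> proj n (phi g) = phin (proj n g)) ->
  (forall g, inW g -> proj m (phi g) = phim (proj m g)) ->
  reid_one phin -> reid_one phim -> reid_one phi.
Proof. exact: main_lemma. Qed.
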